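(* Consider the frameless ALOHA model with $n$ users and $m$ slots and its iterative (peeling) successive interference cancellation decoder, with state $S_u=(\mathtt{C}_u,\mathtt{R}_u)$ when $u$ users are unresolved, as described in the context. Let $1\le u\le n$ and suppose the decoder is in state $S_u=(c_u,r_u)$ with $r_u>0$. Then for integers $a_u,b_u$ with $0\le b_u\le c_u$, $a_u\ge 1$ and $a_u-b_u\le r_u$, $$\Pr\{S_{u-1}=(c_u-b_u,\; r_u-a_u+b_u)\mid S_u=(c_u,r_u)\} = \binom{c_u}{b_u} q_u^{\,b_u}(1-q_u)^{c_u-b_u}\binom{r_u-1}{a_u-1}\left(\frac1u\right)^{a_u-1}\left(1-\frac1u\right)^{r_u-a_u},$$ where $$q_u=\frac{\displaystyle\sum_{d=2}^{n-u+2}\Omega_d\, d(d-1)\,\frac1n\,\frac{u-1}{n-1}\,\frac{\binom{n-u}{d-2}}{\binom{n-2}{d-2}}}{\displaystyle 1-\sum_{d=1}^{n-u+1}\Omega_d\, u\,\frac{\binom{n-u}{d-1}}{\binom{n}{d}}-\sum_{d=0}^{n-u}\Omega_d\,\frac{\binom{n-u}{d}}{\binom{n}{d}}}.$$ Here $b_u$ is the number of slots that leave the cloud and enter the ripple in the transition from $u$ to $u-1$ unresolved users, and $a_u$ is the number of slots that leave the ripple in that transition; $q_u$ is the probability that a slot in the cloud when $u$ users are unresolved is in the ripple when $u-1$ users are unresolved.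
   Context: Frameless ALOHA model: there are $n$ users and $m$ slots. Each slot independently has a (original) degree $d\in\{0,1,\dots,n\}$ with probability $\Omega_d$ (the slot degree distribution; in the basic model each user transmits in each slot independently with probability $p=\beta/n$, so $\Omega_d=\binom{n}{d}p^d(1-p)^{n-d}$), and, given its degree $d$, the set of users transmitting in the slot (its neighbours) is a uniformly random $d$-subset of the $n$ users, chosen without replacement. This defines a bipartite graph between users and slots. Collision channel: a slot with exactly one (uncancelled) transmission is decodable, slots with two or more are not. Decoding (peeling / successive interference cancellation): initially all $n$ users are unresolved ($u=n$). The reduced degree of a slot is the number of its neighbours that are still unresolved. The ripple is the set of slots of reduced degree $1$, with cardinality $\mathtt{R}_u$ (value $r_u$) when $u$ users are unresolved; the cloud is the set of slots of reduced degree at least $2$, with cardinality $\mathtt{C}_u$ (value $c_u$). The decoder state is $S_u=(\mathtt{C}_u,\mathtt{R}_u)$. At each step, if the ripple is nonempty, the decoder picks a slot from the ripple uniformly at random, resolves its unique unresolved neighbour user, and removes all edges of that user from the graph (so $u$ decreases by $1$); if the ripple is empty, decoding stops (fails). Thus $c_{u-1}=c_u-b_u$ and $r_{u-1}=r_u-a_u+b_u$. *)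

(* Defs.v *)
From HB Require Import structures.
From mathcomp Require Import all_boot all_order all_algebra.
Set Implicit Arguments.
Unset Strict Implicit.
Unset Printing Implicit Defensive.
Import Order.TTheory GRing.Theory Num.Theory.
Local Open Scope ring_scope.

(* Bipartite graph: slot j ('I_m) -> its set of neighbour users ('I_n). *)
Definition graph (n m : nat) := {ffun 'I_m -> {set 'I_n}}.

(* Probability of a graph: slots independent; slot j has degree d with prob
   Omega d, and its neighbourhood is a uniform d-subset of the n users. *)
Definition graph_weight (R : fieldType) (n m : nat) (Omega : nat -> R)
  (G : graph n m) : R :=
  \prod_(j < m) (Omega #|G j| / ('C(n, #|G j|))%:R).

(* U = set of unresolved users.  Reduced degree of slot j = #|G j :&: U|. *)
Definition ripple (n m : nat) (G : graph n m) (U : {set 'I_n}) : {set 'I_m} :=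
  [set j | #|G j :&: U| == 1%N].
Definition cloud (n m : nat) (G : graph n m) (U : {set 'I_n}) : {set 'I_m} :=
  [set j | (1 < #|G j :&: U|)%N].

Definition resolve (n m : nat) (G : graph n m) (U : {set 'I_n}) (j : 'I_m)
  : {set 'I_n} := U :\: (G j :&: U).

(* One decoder step on a (sub)distribution over unresolved sets: a ripple slot
   is chosen uniformly at random; if the ripple is empty decoding stops
   (no mass is propagated). *)
Definition dec_step (R : fieldType) (n m : nat) (G : graph n m)
  (mu : {set 'I_n} -> R) : {set 'I_n} -> R :=
  fun U' => \sum_(U : {set 'I_n})
     mu U * ((\sum_(j in ripple G U) ((U' == resolve G U j)%:R)) / (#|ripple G U|)%:R).

(* reach G k U = probability (over decoder choices, given graph G) that the
   decoder performs k steps and the set of unresolved users is then U. *)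
Fixpoint reach (R : fieldType) (n m : nat) (G : graph n m) (k : nat)
  : {set 'I_n} -> R :=
  match k with
  | 0 => fun U => ((U == setT) : nat)%:R
  | k'.+1 => dec_step G (reach R G k')
  end.

Definition state_is (n m : nat) (G : graph n m) (U : {set 'I_n}) (c r : nat)
  : bool := (#|cloud G U| == c) && (#|ripple G U| == r).

Definition prob_state (R : fieldType) (n m : nat) (Omega : nat -> R)
  (u c r : nat) : R :=
  \sum_(G : graph n m) graph_weight Omega G *
    \sum_(U : {set 'I_n} | #|U| == u)
       reach R G (n - u) U * ((state_is G U c r) : nat)%:R.

Definition prob_trans (R : fieldType) (n m : nat) (Omega : nat -> R)
  (u c r c' r' : nat) : R :=
  \sum_(G : graph n m) graph_weight Omega G *
    \sum_(U : {set 'I_n} | #|U| == u)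
       (reach R G (n - u) U * ((state_is G U c r) : nat)%:R *
        ((\sum_(j in ripple G U) ((state_is G (resolve G U j) c' r') : nat)%:R)
          / (#|ripple G U|)%:R)).

Definition cond_trans (R : fieldType) (n m : nat) (Omega : nat -> R)
  (u c r c' r' : nat) : R :=
  prob_trans n m Omega u c r c' r' / prob_state n m Omega u c r.

Definition q_u (R : fieldType) (n : nat) (Omega : nat -> R) (u : nat) : R :=
  (\sum_(2 <= d < (n - u + 2).+1)
      Omega d * (d%:R * (d%:R - 1)) * (1 / n%:R) * ((u%:R - 1) / (n%:R - 1))
      * (('C(n - u, d - 2))%:R / ('C(n - 2, d - 2))%:R))
  / (1 - \sum_(1 <= d < (n - u + 1).+1)
            Omega d * u%:R * (('C(n - u, d - 1))%:R / ('C(n, d))%:R)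
       - \sum_(0 <= d < (n - u).+1)
            Omega d * (('C(n - u, d))%:R / ('C(n, d))%:R)).

(* Main.v *)
Require Import Defs.
From HB Require Import structures.
From mathcomp Require Import all_boot all_order all_algebra zify ring lra.
Set Implicit Arguments.
Unset Strict Implicit.
Unset Printing Implicit Defensive.
Import Order.TTheory GRing.Theory Num.Theory.
Local Open Scope ring_scope.


Section Gen.
Variable R : fieldType.

Lemma prod_bool (I : finType) (P : pred I) :
  \prod_(i : I) ((P i)%:R : R) = ([forall i, P i])%:R.
Proof.
case: forallP => [H|H].
  by rewrite big1 // => i _; rewrite H.
have : ~~ [forall i, P i] by apply/forallP.
rewrite negb_forall => /existsP [i Hi].
by rewrite (bigD1 i) //= (negbTE Hi) mul0r.
Qed.

Lemma set_eq_prod (I : finType) (A B : {set I}) :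
  ((A == B)%:R : R) = \prod_i (((i \in A) == (i \in B))%:R).
Proof.
rewrite prod_bool.
have -> : (A == B) = [forall i, (i \in A) == (i \in B)] => //.
apply/eqP/forallP => [->//|H].
by apply/setP => i; apply/eqP/H.
Qed.

Lemma ffun_eq_prod (I T : finType) (f g : {ffun I -> T}) :
  ((f == g)%:R : R) = \prod_i ((f i == g i)%:R).
Proof.
rewrite prod_bool.
have -> : (f == g) = [forall i, f i == g i] => //.
apply/eqP/forallP => [->//|H].
by apply/ffunP => i; apply/eqP/H.
Qed.

Lemma sum_indic (I : finType) (P : pred I) :
  \sum_i ((P i)%:R : R) = #|P|%:R.
Proof.
rewrite -sum1_card natr_sum [RHS]big_mkcond /=.
apply: eq_bigr => i _; rewrite unfold_in; by case: (P i).
Qed.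

Lemma indic_sum_sets (I : finType) (X : {set I}) (a : nat) :
  ((#|X| == a)%:R : R) =
  \sum_(A : {set I}) (#|A| == a)%:R * (A == X)%:R.
Proof.
rewrite (bigD1 X) //= eqxx mulr1 big1 ?addr0 // => A /negbTE ->.
by rewrite mulr0.
Qed.

Lemma count_sets (I T : finType) (f : I -> T -> R) (Rs : {set I})
  (E : T -> bool) (th : R) (a : nat) :
  (forall j, j \in Rs -> \sum_S f j S * (E S)%:R = th * \sum_S f j S) ->
  \sum_(A : {set I}) (#|A| == a)%:R *
     \prod_j (\sum_S f j S * (((j \in A) == (j \in Rs) && E S))%:R)
  = ('C(#|Rs|, a))%:R * th ^+ a * (1 - th) ^+ (#|Rs| - a)
     * \prod_j \sum_S f j S.
Proof.
move=> Hth.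
set M := fun j => \sum_S f j S.
have step1 : forall A : {set I}, forall j,
   \sum_S f j S * (((j \in A) == (j \in Rs) && E S))%:R =
   M j * (if j \in Rs then (if j \in A then th else 1 - th)
          else (j \notin A)%:R).
  move=> A j; case: (boolP (j \in Rs)) => jR /=.
    case: (boolP (j \in A)) => jA /=.
      rewrite (eq_bigr (fun S => f j S * (E S)%:R)); last first.
        by move=> S _; case: (E S).
      by rewrite Hth // mulrC.
    rewrite (eq_bigr (fun S => f j S - f j S * (E S)%:R)); last first.
      by move=> S _; case: (E S); rewrite /= ?mulr1 ?mulr0 ?subrr ?subr0.
    by rewrite sumrB Hth // /M mulrBr mulr1 mulrC.
  rewrite /M mulr_suml; apply: eq_bigr => S _.
  by case: (j \in A).
have step3 : forall A : {set I},
  \prod_j (if j \in Rs then (if j \in A then th else 1 - th)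
          else ((j \notin A)%:R : R)) =
  (A \subset Rs)%:R * (th ^+ #|A| * (1 - th) ^+ (#|Rs| - #|A|)).
  move=> A; case: (boolP (A \subset Rs)) => sAR; last first.
    have [j jA jR] := subsetPn sAR.
    by rewrite (bigD1 j) //= (negbTE jR) jA /= !mul0r.
  rewrite mul1r (bigID (mem Rs)) /=.
  rewrite [X in _ * X]big1 ?mulr1; last first.
    move=> j /negbTE jR; rewrite jR.
    by have -> : j \notin A by apply/negP => /(subsetP sAR); rewrite jR.
  rewrite (eq_bigr (fun j => if j \in A then th else 1 - th)); last first.
    by move=> j ->.
  rewrite (bigID (mem A)) /=.
  rewrite (eq_bigr (fun _ => th)); last by move=> j /andP [_ ->].
  rewrite [X in _ * X](eq_bigr (fun _ => 1 - th)); last first.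
    by move=> j /andP [_ /negbTE ->].
  rewrite (eq_bigl (mem A)); last first.
    by move=> j /=; apply/andP/idP => [[]//|jA]; split=> //; apply: (subsetP sAR).
  rewrite prodr_const.
  rewrite (eq_bigl (mem (Rs :\: A))); last by move=> j /=; rewrite inE andbC.
  rewrite prodr_const cardsD (setIidPr sAR) //.
rewrite (eq_bigr (fun A : {set I} => ((A \subset Rs) && (#|A| == a))%:R *
   (th ^+ a * (1 - th) ^+ (#|Rs| - a) * \prod_j M j))); last first.
  move=> A _; rewrite (eq_bigr _ (fun j _ => step1 A j)) big_split /= step3.
  case: (boolP (#|A| == a)) => [/eqP ->|]; last first.
    by rewrite andbF !mul0r.
  rewrite andbT mul1r; case: (A \subset Rs); rewrite /= ?mul0r ?mul1r ?mulr0 //.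
  by rewrite mulrC.
rewrite -mulr_suml sum_indic.
have -> : #|(fun A : {set I} => (A \subset Rs) && (#|A| == a))| = 'C(#|Rs|, a).
  by rewrite -cards_draws; apply: eq_card => A; rewrite inE.
by rewrite !mulrA.
Qed.


Lemma one_count (I T : finType) (f : I -> T -> R) (Rs : {set I})
  (E : T -> bool) (th : R) (a : nat) :
  (forall j, j \in Rs -> \sum_S f j S * (E S)%:R = th * \sum_S f j S) ->
  \sum_(G : {ffun I -> T}) (\prod_j f j (G j)) *
      (#|[set j in Rs | E (G j)]| == a)%:R
  = ('C(#|Rs|, a))%:R * th ^+ a * (1 - th) ^+ (#|Rs| - a)
     * \prod_j \sum_S f j S.
Proof.
move=> Hth; rewrite -(count_sets _ Hth).
under eq_bigr do rewrite indic_sum_sets mulr_sumr.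
rewrite exchange_big /=; apply: eq_bigr => A _.
under eq_bigr do rewrite mulrCA.
rewrite -mulr_sumr; congr (_ * _).
rewrite bigA_distr_bigA /=; apply: eq_bigr => G _.
rewrite set_eq_prod -big_split /=; apply: eq_bigr => j _.
by rewrite inE.
Qed.

Lemma two_count (I T : finType) (f : I -> T -> R) (R1 R2 : {set I})
  (E1 E2 : T -> bool) (th1 th2 : R) (a b : nat) :
  [disjoint R1 & R2] ->
  (forall j, j \in R1 -> \sum_S f j S * (E1 S)%:R = th1 * \sum_S f j S) ->
  (forall j, j \in R2 -> \sum_S f j S * (E2 S)%:R = th2 * \sum_S f j S) ->
  \sum_(G : {ffun I -> T}) (\prod_j f j (G j)) *
      (#|[set j in R1 | E1 (G j)]| == a)%:R *
      (#|[set j in R2 | E2 (G j)]| == b)%:R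
  = ('C(#|R1|, a))%:R * th1 ^+ a * (1 - th1) ^+ (#|R1| - a) *
    (('C(#|R2|, b))%:R * th2 ^+ b * (1 - th2) ^+ (#|R2| - b)
     * \prod_j \sum_S f j S).
Proof.
move=> Hdis H1 H2; rewrite -(count_sets _ H2).
under eq_bigr do rewrite [X in _ * X]indic_sum_sets mulr_sumr.
rewrite exchange_big /= mulr_sumr; apply: eq_bigr => A _.
under eq_bigr do rewrite mulrCA.
rewrite -mulr_sumr [RHS]mulrCA; congr (_ * _).
set f' := fun j S => f j S * (((j \in A) == (j \in R2) && E2 S))%:R.
have H1' : forall j, j \in R1 ->
    \sum_S f' j S * (E1 S)%:R = th1 * \sum_S f' j S.
  move=> j jR1.
  have jR2 : j \in R2 = false.
    by apply/negbTE; move: Hdis; rewrite disjoint_subset => /subsetP/(_ _ jR1).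
  rewrite /f' jR2 /=.
  under eq_bigr do rewrite mulrAC.
  by rewrite -mulr_suml H1 // -mulr_suml mulrA.
rewrite -(one_count _ H1').
apply: eq_bigr => G _.
rewrite set_eq_prod mulrAC -big_split /=; congr (_ * _).
by apply: eq_bigr => j _; rewrite /f' inE.
Qed.

End Gen.


Section Cnt.
Variable T : finType.
Implicit Types A B U S : {set T}.

Lemma setUI_l A B U : A \subset U -> B \subset ~: U -> (A :|: B) :&: U = A.
Proof.
move=> sAU sBU; apply/setP => x; rewrite !inE.
case: (boolP (x \in A)) => xA /=; first by rewrite (subsetP sAU).
case: (boolP (x \in B)) => xB //=.
by move: (subsetP sBU x xB); rewrite inE => /negbTE.
Qed.

Lemma setUD_r A B U : A \subset U -> B \subset ~: U -> (A :|: B) :\: U = B.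
Proof.
move=> sAU sBU; apply/setP => x; rewrite !inE.
case: (boolP (x \in U)) => xU /=.
  apply/esym/negP => xB; move: (subsetP sBU x xB); rewrite inE xU //.
case: (boolP (x \in A)) => xA //=.
by move: xU; rewrite (subsetP sAU).
Qed.

Lemma cnt_split U (P : pred {set T}) (k d : nat) :
  (k <= d)%N -> (forall A, P A -> #|A| = k) ->
  #|[set S : {set T} | (#|S| == d) && P (S :&: U)]| =
  (#|[set A : {set T} | (A \subset U) && P A]| * 'C(#|~: U|, d - k))%N.
Proof.
move=> kd HP.
rewrite -cards_draws -cardsX.
rewrite -(@card_in_imset _ _ (fun S => (S :&: U, S :\: U))); last first.
  move=> S1 S2 _ _ [] E1 E2.
  by rewrite -(setID S1 U) -(setID S2 U) E1 E2.
congr #|pred_of_set _|.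
apply/setP => [[A B]]; rewrite !inE /=; apply/imsetP/andP.
  move=> [S]; rewrite inE => /andP [/eqP Sd HPS] [-> ->].
  rewrite subsetIr HPS; split=> //; apply/andP; split.
    by apply/subsetP => x; rewrite !inE => /andP [].
  by rewrite -Sd -(cardsID U S) (HP _ HPS) addKn.
move=> [/andP [sAU HPA] /andP [sBU /eqP cB]].
exists (A :|: B); last by rewrite setUI_l // setUD_r.
rewrite inE setUI_l // HPA andbT.
by rewrite -(cardsID U) setUI_l // setUD_r // cB (HP _ HPA) subnKC.
Qed.

End Cnt.

Lemma sum_by_deg (R : fieldType) (n : nat) (Q : pred {set 'I_n}) (g : nat -> R) :
  \sum_(S : {set 'I_n}) g #|S| * (Q S)%:R =
  \sum_(d < n.+1) g d * (#|[set S : {set 'I_n} | (#|S| == d) && Q S]|)%:R.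
Proof.
have sind : forall (I : finType) (P : pred I),
    \sum_i ((P i)%:R : R) = #|P|%:R.
  move=> I P; rewrite -sum1_card natr_sum [RHS]big_mkcond /=.
  apply: eq_bigr => i _; rewrite unfold_in; by case: (P i).
under [RHS]eq_bigr => d _.
  rewrite (_ : #|_| = #|(fun S : {set 'I_n} => (#|S| == d) && Q S)|); last first.
    by apply: eq_card => S; rewrite inE.
  rewrite -sind mulr_sumr.
  over.
rewrite exchange_big /=; apply: eq_bigr => S _.
have Sn : (#|S| < n.+1)%N by rewrite ltnS -[X in (_ <= X)%N]card_ord max_card.
rewrite (bigD1 (Ordinal Sn)) //= eqxx /= big1 ?addr0 //.
move=> d /negbTE dS.
have -> : (#|S| == d) = false.
  by apply/negbTE/negP => /eqP E; move: dS; rewrite -val_eqE /= -E eqxx.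
by rewrite /= mulr0.
Qed.


Definition phi (n : nat) (U S : {set 'I_n}) : option ({set 'I_n} * bool) :=
  if (1 < #|S :&: U|)%N then None else Some (S :\: U, #|S :&: U| == 1%N).

Section Inv.
Variable n : nat.
Implicit Types S U V W : {set 'I_n}.

Lemma card_splitW S U W : U \subset W ->
  #|S :&: W| = (#|S :&: U| + #|(S :\: U) :&: W|)%N.
Proof.
move=> UW; rewrite -(cardsID U (S :&: W)).
have -> : S :&: W :&: U = S :&: U.
  apply/setP => x; rewrite !inE; case: (boolP (x \in U)) => xU; last by rewrite !andbF.
  by rewrite (subsetP UW) // andbT.
have -> : S :&: W :\: U = (S :\: U) :&: W.
  by apply/setP => x; rewrite !inE; case: (x \in U); case: (x \in S); case: (x \in W).
by [].
Qed.

Lemma phi_eq_props S S' U : phi U S = phi U S' ->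
  ((1 < #|S :&: U|)%N = (1 < #|S' :&: U|)%N) /\
  ((#|S :&: U| <= 1)%N -> #|S :&: U| = #|S' :&: U| /\ S :\: U = S' :\: U).
Proof.
rewrite /phi; case: ifP => h1; case: ifP => h2 //.
  by move=> _; split=> // h; move: h1; rewrite ltnNge h.
move=> [E1 E2]; split=> // _; split=> //.
move: h1 h2 E2; case: #|S :&: U| => [|[|k]]; case: #|S' :&: U| => [|[|k']] //.
Qed.

Lemma phi_ripple S S' U W : U \subset W -> phi U S = phi U S' ->
  (#|S :&: W| == 1%N) = (#|S' :&: W| == 1%N).
Proof.
move=> UW /phi_eq_props [E1 E2].
rewrite (card_splitW S UW) (card_splitW S' UW).
case: (leqP #|S :&: U| 1) => h.
  by have [-> ->] := E2 h.
have h' : (1 < #|S' :&: U|)%N by rewrite -E1.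
have F : forall p q, (1 < p)%N -> (p + q == 1)%N = false.
  by move=> p q; case: p => [|[|p]].
by rewrite !F.
Qed.

Lemma resolve_false V W (X : {set 'I_n}) U : U \subset V -> (exists2 y, y \in X & y \in U) ->
  (V == W :\: X) = false.
Proof.
move=> UV [y yX yU]; apply/negbTE/negP => /eqP E.
by move: (subsetP UV y yU); rewrite E !inE yX.
Qed.

Lemma phi_resolve S S' U V W : U \subset V -> U \subset W -> phi U S = phi U S' ->
  (#|S :&: W| == 1%N) ->
  (V == W :\: (S :&: W)) = (V == W :\: (S' :&: W)).
Proof.
move=> UV UW E h1; have [E1 E2] := phi_eq_props E.
have hS : (#|S :&: U| <= 1)%N.
  by move: h1; rewrite (card_splitW S UW) => /eqP; lia.
have [E3 E4] := E2 hS.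
case: (posnP #|S :&: U|) => h0.
  have -> : S :&: W = (S :\: U) :&: W.
    apply/setP => x; rewrite !inE; case: (boolP (x \in U)) => xU //=.
    by apply/andP => -[xS xW]; move/eqP: h0; rewrite cards_eq0 => /eqP/setP/(_ x); rewrite !inE xS xU.
  have -> : S' :&: W = (S' :\: U) :&: W.
    apply/setP => x; rewrite !inE; case: (boolP (x \in U)) => xU //=.
    by apply/andP => -[xS xW]; move/eqP: h0; rewrite E3 cards_eq0 => /eqP/setP/(_ x); rewrite !inE xS xU.
  by rewrite E4.
have [y yS] : exists y, y \in S :&: U.
  by apply/set0Pn; rewrite -card_gt0.
have [y' yS'] : exists y, y \in S' :&: U.
  by apply/set0Pn; rewrite -card_gt0 -E3.
rewrite !(resolve_false W UV) //.
  exists y'; move: yS'; rewrite !inE => /andP [z1 z2] //.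
  by rewrite z1 (subsetP UW y' z2).
exists y; move: yS; rewrite !inE => /andP [z1 z2] //.
by rewrite z1 (subsetP UW y z2).
Qed.

End Inv.

Section Inv2.
Variables (R : fieldType) (n m : nat).
Implicit Types U V W : {set 'I_n}.

Lemma ripple_inv (G G' : graph n m) U W : U \subset W ->
  (forall j, phi U (G j) = phi U (G' j)) -> ripple G W = ripple G' W.
Proof.
by move=> UW H; apply/setP => j; rewrite !inE (phi_ripple UW (H j)).
Qed.

Lemma cloud_inv (G G' : graph n m) U :
  (forall j, phi U (G j) = phi U (G' j)) -> cloud G U = cloud G' U.
Proof.
by move=> H; apply/setP => j; rewrite !inE; have [-> _] := phi_eq_props (H j).
Qed.

Lemma reach_inv (G G' : graph n m) U :
  (forall j, phi U (G j) = phi U (G' j)) ->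
  forall k V, U \subset V -> reach R G k V = reach R G' k V.
Proof.
move=> H; elim=> [|k IH] V UV //=.
rewrite /dec_step; apply: eq_bigr => W _.
case: (boolP (U \subset W)) => UW.
  rewrite IH // (ripple_inv UW H); congr (_ * (_ / _)).
  apply: eq_bigr => j; rewrite inE => hj.
  by rewrite /resolve (phi_resolve UV UW (H j)) // (phi_ripple UW (H j)).
have Z : forall G0 : graph n m, \sum_(j in ripple G0 W) ((V == resolve G0 W j)%:R : R) = 0.
  move=> G0; apply: big1 => j _.
  case: eqP => // E; move: UW; rewrite (subset_trans UV) // E.
  by apply/subsetP => x; rewrite !inE => /andP [].
by rewrite !Z !mul0r !mulr0.
Qed.

Lemma state_inv (G G' : graph n m) U c r :
  (forall j, phi U (G j) = phi U (G' j)) -> state_is G U c r = state_is G' U c r.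
Proof.
by move=> H; rewrite /state_is (cloud_inv H) (ripple_inv (subxx U) H).
Qed.

End Inv2.


Definition Aset n m (G : graph n m) (U : {set 'I_n}) x :=
  [set j in ripple G U | x \in G j].
Definition Bset n m (G : graph n m) (U : {set 'I_n}) x :=
  [set j in cloud G U | (x \in G j) && (#|G j :&: U| == 2%N)].

Section Tr.
Variables (R : fieldType) (n m : nat).
Implicit Types (U S : {set 'I_n}) (G : graph n m).

Lemma card_Dx S U x : x \in U -> #|S :&: U| = ((x \in S) + #|S :&: (U :\ x)|)%N.
Proof.
move=> xU; rewrite (cardsD1 x (S :&: U)) inE xU andbT; congr (_ + _)%N.
by apply: eq_card => y; rewrite !inE; case: (y == x); case: (y \in S); case: (y \in U).
Qed.

Lemma cloud_resolve G U x : x \in U ->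
  cloud G (U :\ x) = cloud G U :\: Bset G U x.
Proof.
move=> xU; apply/setP => j; rewrite !inE (card_Dx (G j) xU).
move: (#|G j :&: (U :\ x)|) => k.
by case: (x \in G j); case: k => [|[|[|k]]].
Qed.

Lemma ripple_resolve G U x : x \in U ->
  ripple G (U :\ x) = (ripple G U :\: Aset G U x) :|: Bset G U x.
Proof.
move=> xU; apply/setP => j; rewrite !inE (card_Dx (G j) xU).
move: (#|G j :&: (U :\ x)|) => k.
by case: (x \in G j); case: k => [|[|[|k]]].
Qed.

Lemma state_resolve G U x c r a b : x \in U ->
  #|cloud G U| = c -> #|ripple G U| = r -> (b <= c)%N -> (a <= r + b)%N ->
  state_is G (U :\ x) (c - b) (r + b - a) =
  (#|Bset G U x| == b) && (#|Aset G U x| == a).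
Proof.
move=> xU Hc Hr hb ha.
have sB : Bset G U x \subset cloud G U.
  by apply/subsetP => j; rewrite inE => /andP [].
have sA : Aset G U x \subset ripple G U.
  by apply/subsetP => j; rewrite inE => /andP [].
have lB : (#|Bset G U x| <= c)%N by rewrite -Hc subset_leq_card.
have lA : (#|Aset G U x| <= r)%N by rewrite -Hr subset_leq_card.
rewrite /state_is cloud_resolve // ripple_resolve //.
rewrite cardsD (setIidPr sB) Hc.
rewrite cardsU.
have -> : (ripple G U :\: Aset G U x) :&: Bset G U x = set0.
  apply/setP => j; rewrite !inE.
  by case: (#|G j :&: U|) => [|[|k]]; rewrite ?andbF ?andbT //= !andbF.
rewrite cards0 subn0 cardsD (setIidPr sA) Hr.
move: (#|Bset G U x|) (#|Aset G U x|) lB lA => B A lB lA.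
apply/andP/andP => [[/eqP h1 /eqP h2]|[/eqP h1 /eqP h2]]; split; apply/eqP; lia.
Qed.

Lemma sum_in_indic (I : finType) (A : {set I}) (P : pred I) :
  \sum_(j in A) ((P j)%:R : R) = #|[set j in A | P j]|%:R.
Proof.
rewrite -sum1_card natr_sum [RHS]big_mkcond [LHS]big_mkcond /=.
by apply: eq_bigr => j _; rewrite !inE; case: (j \in A); case: (P j).
Qed.

Lemma sum_resolve G U (F : {set 'I_n} -> R) :
  \sum_(j in ripple G U) F (resolve G U j) =
  \sum_(x in U) #|Aset G U x|%:R * F (U :\ x).
Proof.
rewrite (eq_bigr (fun j => \sum_(x in U) ((x \in G j)%:R) * F (U :\ x))).
  rewrite exchange_big /=; apply: eq_bigr => x xU.
  by rewrite -mulr_suml sum_in_indic.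
move=> j; rewrite inE => /cards1P [y Ey].
have yGU : y \in G j :&: U by rewrite Ey inE.
move: (yGU); rewrite inE => /andP [yG yU].
rewrite /resolve Ey (bigD1 y) //= yG mul1r big1 ?addr0 // => x /andP [xU xy].
have -> : (x \in G j) = false.
  apply/negbTE/negP => xG.
  have : x \in G j :&: U by rewrite inE xG xU.
  by rewrite Ey inE (negbTE xy).
by rewrite mul0r.
Qed.

Lemma trans_decomp G U c r a b :
  #|cloud G U| = c -> #|ripple G U| = r -> (b <= c)%N -> (a <= r + b)%N ->
  \sum_(j in ripple G U) ((state_is G (resolve G U j) (c - b) (r + b - a))%:R : R)
  = a%:R * \sum_(x in U) (#|Aset G U x| == a)%:R * (#|Bset G U x| == b)%:R.
Proof.
move=> Hc Hr hb ha.
rewrite (sum_resolve G U (fun V => (state_is G V (c - b) (r + b - a))%:R)).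
rewrite mulr_sumr; apply: eq_bigr => x xU.
rewrite (state_resolve xU Hc Hr hb ha).
move: (#|Aset G U x|) (#|Bset G U x|) => A B.
case: (boolP (A == a)%N) => [/eqP ->|_].
  by case: (B == b)%N; rewrite /= ?mulr0 ?mulr1.
by rewrite andbF /= !mulr0 mul0r mulr0.
Qed.

End Tr.


Section Cnt2.
Variable n : nat.
Implicit Types (U S A B : {set 'I_n}).

Lemma card_compl U : #|~: U| = (n - #|U|)%N.
Proof. by rewrite [LHS]cardsCs setCK card_ord. Qed.

Lemma cnt_k U k d :
  #|[set S : {set 'I_n} | (#|S| == d) && (#|S :&: U| == k)]| =
  if (k <= d)%N then ('C(#|U|, k) * 'C(n - #|U|, d - k))%N else 0%N.
Proof.
case: leqP => kd.
  rewrite (@cnt_split _ U (fun A => #|A| == k) k d kd); last by move=> A /eqP.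
  by rewrite cards_draws card_compl.
apply: eq_card0 => S; rewrite inE; apply/negP => /andP [/eqP Sd /eqP Sk].
have : (#|S :&: U| <= #|S|)%N by rewrite subset_leq_card // subsetIl.
by rewrite Sd Sk leqNgt kd.
Qed.

Lemma cnt_pair U x0 : x0 \in U ->
  #|[set A : {set 'I_n} | (A \subset U) && ((#|A| == 2) && (x0 \in A))]| = (#|U| - 1)%N.
Proof.
move=> x0U.
have -> : (#|U| - 1 = 'C(#|U :\ x0|, 1))%N by rewrite bin1 (cardsD1 x0 U) x0U add1n subn1.
rewrite -cards_draws.
rewrite -[RHS](@card_in_imset _ _ (fun B => x0 |: B)); last first.
  move=> B1 B2 h1 h2 E; move: h1 h2; rewrite !inE => /andP [s1 _] /andP [s2 _].
  have n1 : x0 \notin B1 by apply/negP => /(subsetP s1); rewrite !inE eqxx.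
  have n2 : x0 \notin B2 by apply/negP => /(subsetP s2); rewrite !inE eqxx.
  by rewrite -(setU1K n1) -(setU1K n2) E.
congr #|pred_of_set _|; apply/setP => A; rewrite inE; apply/idP/imsetP.
  move=> /andP [sAU /andP [/eqP cA xA]]; exists (A :\ x0); last by rewrite setD1K.
  rewrite inE; apply/andP; split.
    apply/subsetP => y; rewrite !inE => /andP [-> yA] /=; exact: (subsetP sAU).
  by move: cA; rewrite (cardsD1 x0 A) xA add1n => -[->].
move=> [B]; rewrite inE => /andP [sB /eqP cB] ->.
have nB : x0 \notin B by apply/negP => /(subsetP sB); rewrite !inE eqxx.
rewrite cardsU1 nB cB setU11 andbT eqxx andbT.
apply/subsetP => y; rewrite !inE => /orP [/eqP -> //|/(subsetP sB)].
by rewrite !inE => /andP [].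
Qed.

Lemma cnt_x0 U x0 d : x0 \in U ->
  #|[set S : {set 'I_n} | (#|S| == d) && ((x0 \in S) && (#|S :&: U| == 2))]| =
  if (2 <= d)%N then ((#|U| - 1) * 'C(n - #|U|, d - 2))%N else 0%N.
Proof.
move=> x0U; case: (leqP 2 d) => kd.
  rewrite -(cnt_pair x0U) -card_compl.
  rewrite -(@cnt_split _ U (fun A => (#|A| == 2) && (x0 \in A)) 2 d kd); last first.
    by move=> A /andP [/eqP].
  apply: eq_card => S; rewrite !inE x0U andbT.
  by case: (x0 \in S); case: (#|S :&: U| == 2)%N; rewrite ?andbF ?andbT.
apply: eq_card0 => S; rewrite inE; apply/negP => /andP [/eqP Sd /andP [_ /eqP Sk]].
have : (#|S :&: U| <= #|S|)%N by rewrite subset_leq_card // subsetIl.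
by rewrite Sd Sk leqNgt kd.
Qed.

End Cnt2.


Definition pwt (R : fieldType) (n : nat) (Omega : nat -> R) (S : {set 'I_n}) : R :=
  Omega #|S| / ('C(n, #|S|))%:R.

Lemma sum_range (R : fieldType) (F : nat -> R) a b N : (a <= b)%N -> (b <= N)%N ->
  (forall d, (b <= d)%N -> (d < N)%N -> F d = 0) ->
  \sum_(a <= d < b) F d = \sum_(d < N) (if (a <= d)%N then F d else 0).
Proof.
move=> ab bN HF.
rewrite -(big_mkord xpredT (fun d => if (a <= d)%N then F d else 0)).
rewrite (big_cat_nat (leq0n a) (leq_trans ab bN)) /=.
rewrite [X in X + _]big_nat_cond [X in X + _]big1 ?add0r; last first.
  by move=> d /andP [/andP [_ da] _]; rewrite leqNgt da.
rewrite (big_cat_nat ab bN) /=.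
rewrite [X in _ + X]big_nat_cond [X in _ + X]big1 ?addr0; last first.
  move=> d /andP [/andP [bd dN] _]; rewrite HF //.
  by case: (a <= d)%N.
rewrite big_nat_cond [RHS]big_nat_cond; apply: eq_bigr => d /andP [/andP [ad _] _].
by rewrite ad.
Qed.

Section Mass.
Variables (R : realFieldType) (n : nat) (Omega : nat -> R).
Hypothesis HOmega_nonneg : forall d : nat, (d <= n)%N -> 0 <= Omega d.
Hypothesis HOmega_sum : \sum_(d < n.+1) Omega d = 1.
Implicit Types (U S O : {set 'I_n}).

Local Notation pw := (@pwt R n Omega).

Lemma pw_ge0 S : 0 <= pw S.
Proof.
rewrite /pwt divr_ge0 ?ler0n // HOmega_nonneg //.
by rewrite -[X in (_ <= X)%N]card_ord max_card.
Qed.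

Lemma sum_pw_Q (Q : pred {set 'I_n}) :
  \sum_S pw S * (Q S)%:R =
  \sum_(d < n.+1) Omega d / ('C(n, d))%:R *
     (#|[set S : {set 'I_n} | (#|S| == d) && Q S]|)%:R.
Proof. exact: (sum_by_deg Q (fun d => Omega d / ('C(n, d))%:R)). Qed.

Lemma binn_neq0 (d : 'I_n.+1) : (('C(n, d))%:R : R) != 0.
Proof. by rewrite pnatr_eq0 -lt0n bin_gt0 -ltnS. Qed.

Lemma sum_pw_all : \sum_S pw S = 1.
Proof.
rewrite (eq_bigr (fun S => pw S * (predT S)%:R)); last by move=> S _; rewrite mulr1.
rewrite sum_pw_Q -[RHS]HOmega_sum; apply: eq_bigr => d _.
have -> : #|[set S : {set 'I_n} | (#|S| == d) && predT S]| = 'C(n, d).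
  by rewrite -[X in 'C(X, _)]card_ord -card_draws; apply: eq_card => S; rewrite !inE andbT.
by rewrite divfK // (binn_neq0 d).
Qed.

Lemma sum_pw_k U k :
  \sum_S pw S * (#|S :&: U| == k)%:R =
  \sum_(d < n.+1) Omega d / ('C(n, d))%:R *
     (if (k <= d)%N then ('C(#|U|, k) * 'C(n - #|U|, d - k))%N else 0%N)%:R.
Proof. by rewrite sum_pw_Q; apply: eq_bigr => d _; rewrite cnt_k. Qed.

Lemma sum_pw_x0 U x0 : x0 \in U ->
  \sum_S pw S * ((x0 \in S) && (#|S :&: U| == 2))%:R =
  \sum_(d < n.+1) Omega d / ('C(n, d))%:R *
     (if (2 <= d)%N then ((#|U| - 1) * 'C(n - #|U|, d - 2))%N else 0%N)%:R.
Proof. by move=> x0U; rewrite sum_pw_Q; apply: eq_bigr => d _; rewrite cnt_x0. Qed.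

End Mass.


Section Mass2.
Variables (R : realFieldType) (n : nat) (Omega : nat -> R).
Hypothesis HOmega_nonneg : forall d : nat, (d <= n)%N -> 0 <= Omega d.
Hypothesis HOmega_sum : \sum_(d < n.+1) Omega d = 1.
Implicit Types (U S O : {set 'I_n}).
Local Notation pw := (@pwt R n Omega).

Variables (u : nat) (U : {set 'I_n}).
Hypotheses (hU : #|U| = u) (hu1 : (1 <= u)%N) (hun : (u <= n)%N).

Lemma sum1_eq :
  \sum_S pw S * (#|S :&: U| == 1%N)%:R =
  \sum_(1 <= d < (n - u + 1).+1)
     Omega d * u%:R * (('C(n - u, d - 1))%:R / ('C(n, d))%:R).
Proof.
rewrite sum_pw_k hU (@sum_range _ _ 1 _ n.+1) //; first last.
- move=> d hd _; rewrite bin_small ?mul0r ?mulr0 //; lia.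
- lia.
apply: eq_bigr => d _; case: (1 <= d)%N; rewrite ?mulr0 //.
by rewrite bin1 natrM; ring.
Qed.

Lemma sum0_eq :
  \sum_S pw S * (#|S :&: U| == 0%N)%:R =
  \sum_(0 <= d < (n - u).+1)
            Omega d * (('C(n - u, d))%:R / ('C(n, d))%:R).
Proof.
rewrite sum_pw_k hU (@sum_range _ _ 0 _ n.+1) //; first last.
- move=> d hd _; rewrite bin_small ?mul0r ?mulr0 //; lia.
- lia.
apply: eq_bigr => d _ /=.
by rewrite bin0 mul1n subn0; ring.
Qed.

Lemma den_eq :
  \sum_S pw S * (1 < #|S :&: U|)%N%:R =
  1 - \sum_(1 <= d < (n - u + 1).+1)
            Omega d * u%:R * (('C(n - u, d - 1))%:R / ('C(n, d))%:R)
       - \sum_(0 <= d < (n - u).+1)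
            Omega d * (('C(n - u, d))%:R / ('C(n, d))%:R).
Proof.
rewrite -sum1_eq -sum0_eq.
rewrite (eq_bigr (fun S => pw S - pw S * (#|S :&: U| == 1%N)%:R
   - pw S * (#|S :&: U| == 0%N)%:R)); last first.
  move=> S _.
  by case: #|S :&: U| => [|[|k]] /=; rewrite ?mulr0 ?mulr1 ?subr0 ?subrr ?sub0r ?subrr.
by rewrite !sumrB (sum_pw_all HOmega_sum).
Qed.

Lemma num_eq x0 : x0 \in U ->
  \sum_S pw S * ((x0 \in S) && (#|S :&: U| == 2))%:R =
  \sum_(2 <= d < (n - u + 2).+1)
      Omega d * (d%:R * (d%:R - 1)) * (1 / n%:R) * ((u%:R - 1) / (n%:R - 1))
      * (('C(n - u, d - 2))%:R / ('C(n - 2, d - 2))%:R).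
Proof.
move=> x0U; rewrite sum_pw_x0 // hU.
case: (ltnP 1 u) => hu2; last first.
  have -> : u = 1%N by lia.
  rewrite big1; last by move=> d _; rewrite subnn mul0n if_same mulr0.
  by rewrite big1 // => d _; rewrite subrr mul0r mulr0 mul0r.
rewrite (@sum_range _ _ 2 (n - u + 2).+1 n.+1);
  [ | lia | lia | move=> d hd _; rewrite bin_small ?mul0r ?mulr0 //; lia].
apply: eq_bigr => d _; case: (leqP 2 d) => hd; last by rewrite mulr0.
move: (nat_of_ord d) hd (ltn_ord d) => {}d hd; rewrite ltnS => dn.
have [k nk] : exists k, n = k.+2 by exists (n - 2)%N; lia.
have [e de] : exists e, d = e.+2 by exists (d - 2)%N; lia.
have HB : ('C(n, d) * (d * (d - 1)) = n * (n - 1) * 'C(n - 2, d - 2))%N.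
  rewrite nk de /=.
  have h1 := mul_bin_diag k.+2 e.+1. have h2 := mul_bin_diag k.+1 e.
  simpl in h1, h2. rewrite !subn2 /= !subn1 /=. nia.
have Cne : ('C(n, d))%:R != 0 :> R by rewrite pnatr_eq0 -lt0n bin_gt0.
have C2ne : ('C(n - 2, d - 2))%:R != 0 :> R by rewrite pnatr_eq0 -lt0n bin_gt0; lia.
have nne : n%:R != 0 :> R by rewrite pnatr_eq0; lia.
have n1ne : (n - 1)%:R != 0 :> R by rewrite pnatr_eq0; lia.
have Ed : (d%:R - 1 : R) = (d - 1)%N%:R by rewrite natrB //; lia.
have Eu : (u%:R - 1 : R) = (u - 1)%N%:R by rewrite natrB //; lia.
have En : (n%:R - 1 : R) = (n - 1)%N%:R by rewrite natrB //; lia.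
rewrite Ed Eu En -natrM.
have HX : ((d * (d - 1))%N%:R : R) =
    (n * (n - 1) * 'C(n - 2, d - 2))%N%:R / ('C(n, d))%:R.
  by rewrite -HB [in RHS]natrM [in RHS]mulrC mulKf.
rewrite HX !natrM; field.
by rewrite Cne C2ne nne n1ne.
Qed.

End Mass2.


Section Mass3.
Variables (R : realFieldType) (n : nat) (Omega : nat -> R).
Hypothesis HOmega_nonneg : forall d : nat, (d <= n)%N -> 0 <= Omega d.
Hypothesis HOmega_sum : \sum_(d < n.+1) Omega d = 1.
Implicit Types (S O : {set 'I_n}).
Local Notation pw := (@pwt R n Omega).

Variables (u : nat) (U : {set 'I_n}).
Hypotheses (hU : #|U| = u) (hu1 : (1 <= u)%N) (hun : (u <= n)%N).

Lemma phi_None S : (phi U S == None) = (1 < #|S :&: U|)%N.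
Proof. by rewrite /phi; case: ifP. Qed.

Lemma cloud_mass x0 : x0 \in U ->
  \sum_S pw S * (phi U S == None)%:R * ((x0 \in S) && (#|S :&: U| == 2))%:R
  = q_u n Omega u * \sum_S pw S * (phi U S == None)%:R.
Proof.
move=> x0U.
rewrite (eq_bigr (fun S => pw S * ((x0 \in S) && (#|S :&: U| == 2))%:R)); last first.
  move=> S _; rewrite phi_None.
  by case: (x0 \in S); case: #|S :&: U| => [|[|[|k]]]; rewrite /= ?mulr0 ?mulr1.
under [in RHS]eq_bigr do rewrite phi_None.
set Nr := \sum_S _; set Dr := \sum_S _.
have N0 : 0 <= Nr by apply: sumr_ge0 => S _; rewrite mulr_ge0 ?ler0n // (pw_ge0 HOmega_nonneg).
have ND : Nr <= Dr.
  apply: ler_sum => S _; apply: ler_wpM2l; first exact: (pw_ge0 HOmega_nonneg).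
  by rewrite ler_nat; case: (x0 \in S); case: #|S :&: U| => [|[|[|k]]].
have -> : q_u n Omega u = Nr / Dr.
  by rewrite /q_u /Nr /Dr (num_eq Omega hU hu1 hun x0U) (den_eq HOmega_sum hU hu1 hun).
case: (eqVneq Dr 0) => [D0|Dn]; last by rewrite divfK.
have -> : Nr = 0 by move: D0 N0 ND => D0; rewrite D0 => N0 ND; lra.
by rewrite !mul0r.
Qed.

Lemma phi_Some S O : (phi U S == Some (O, true)) = (#|S :&: U| == 1%N) && (S :\: U == O).
Proof.
rewrite /phi; case: ifP => h.
  by move: h; case: #|S :&: U| => [|[|k]].
apply/eqP/andP => [[E1 E2]|[E2 /eqP E1]]; first by rewrite E1 E2.
by rewrite E1 E2.
Qed.

Lemma ripple_mass x0 O : x0 \in U ->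
  \sum_S pw S * (phi U S == Some (O, true))%:R * (x0 \in S)%:R
  = (1 / u%:R) * \sum_S pw S * (phi U S == Some (O, true))%:R.
Proof.
move=> x0U.
case: (boolP (O \subset ~: U)) => sO; last first.
  have [y yO yU] := subsetPn sO.
  have F : forall S, (S :\: U == O) = false.
    move=> S; apply/negbTE/negP => /eqP E; move: yO; rewrite -E !inE => /andP [yU' _].
    by move: yU; rewrite inE yU'.
  rewrite !big1 ?mulr0 // => S _; by rewrite phi_Some F andbF ?mulr0 ?mul0r.
have yO : forall y, y \in U -> y \notin O.
  by move=> y yU; apply/negP => /(subsetP sO); rewrite inE yU.
have cls : [set S | (#|S :&: U| == 1%N) && (S :\: U == O)] = [set y |: O | y in U].
  apply/setP => S; rewrite inE; apply/andP/imsetP.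
    move=> [/cards1P [y Ey] /eqP EO]; exists y.
      have : y \in S :&: U by rewrite Ey inE.
      by rewrite inE => /andP [].
    by rewrite -(setID S U) Ey EO.
  move=> [y yU ->]; split.
    apply/cards1P; exists y; apply/setP => z; rewrite !inE.
    case: (boolP (z == y)) => [/eqP -> |zy] /=; first by rewrite yU.
    by apply/negP => /andP [zO zU]; move: (yO z zU); rewrite zO.
  apply/eqP/setP => z; rewrite !inE.
  case: (boolP (z \in U)) => zU /=.
    by apply/esym/negP => zO; move: (yO z zU); rewrite zO.
  have -> // : (z == y) = false.
  by case: eqP => // E; rewrite E yU in zU.
have inj : {in U &, injective (fun y => y |: O)}.
  move=> y1 y2 y1U y2U E.
  have : y1 \in y2 |: O by rewrite -E setU11.
  by rewrite !inE (negbTE (yO y1 y1U)) orbF => /eqP.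
have conv : forall F : {set 'I_n} -> R,
    \sum_S F S * (phi U S == Some (O, true))%:R = \sum_(y in U) F (y |: O).
  move=> F; rewrite -(big_imset _ inj) /= -cls [RHS]big_mkcond /=.
  by apply: eq_bigr => S _; rewrite phi_Some inE; case: (_ && _); rewrite ?mulr1 ?mulr0.
set g := Omega (#|O|.+1) / ('C(n, #|O|.+1))%:R.
have pwy : forall y, y \in U -> pw (y |: O) = g.
  move=> y yU; rewrite /g /pwt cardsU1 (yO y yU); reflexivity.
under eq_bigr do rewrite mulrAC.
rewrite conv [X in _ * X]conv.
rewrite (eq_bigr (fun y => g * (x0 == y)%:R)); last first.
  by move=> y yU; rewrite pwy // !inE (negbTE (yO x0 x0U)) orbF.
rewrite [X in _ * X](eq_bigr (fun _ => g)); last by move=> y yU; rewrite pwy.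
rewrite sumr_const hU (bigD1 x0) //= eqxx mulr1 big1 ?addr0; last first.
  by move=> y /andP [_ yx]; rewrite eq_sym (negbTE yx) mulr0.
have une : u%:R != 0 :> R by rewrite pnatr_eq0; lia.
by rewrite -mulr_natr; field.
Qed.

End Mass3.


Section Main.
Variables (R : realFieldType) (n m : nat) (Omega : nat -> R).
Hypothesis HOmega_nonneg : forall d : nat, (d <= n)%N -> 0 <= Omega d.
Hypothesis HOmega_sum : \sum_(d < n.+1) Omega d = 1.
Variables (u c r a b : nat) (U : {set 'I_n}) (x0 : 'I_n).
Hypotheses (hU : #|U| = u) (hu1 : (1 <= u)%N) (hun : (u <= n)%N) (x0U : x0 \in U).

Definition Phi (G : graph n m) : {ffun 'I_m -> option ({set 'I_n} * bool)} :=
  [ffun j => phi U (G j)].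

Definition hh (G : graph n m) : R := reach R G (n - u) U * (state_is G U c r)%:R.

Definition KK : R :=
  ('C(r, a))%:R * (1 / u%:R) ^+ a * (1 - 1 / u%:R) ^+ (r - a) *
  (('C(c, b))%:R * (q_u n Omega u) ^+ b * (1 - q_u n Omega u) ^+ (c - b)).

Lemma gw_pw (G : graph n m) : graph_weight Omega G = \prod_j pwt Omega (G j).
Proof. by []. Qed.

Lemma main_U :
  \sum_(G : graph n m) graph_weight Omega G * hh G *
      (#|Aset G U x0| == a)%:R * (#|Bset G U x0| == b)%:R
  = KK * \sum_(G : graph n m) graph_weight Omega G * hh G.
Proof.
rewrite (partition_big Phi xpredT) // [in RHS](partition_big Phi xpredT) // mulr_sumr.
apply: eq_bigr => tau _.
case: (pickP (fun G : graph n m => Phi G == tau)) => [G0 /eqP HG0|none]; last first.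
  by rewrite !big_pred0 ?mulr0 // => G /=; rewrite none.
have Hphi : forall G : graph n m, Phi G == tau -> forall j, phi U (G j) = phi U (G0 j).
  move=> G /eqP HG j.
  have := congr1 (fun f : {ffun _ -> _} => f j) (etrans HG (esym HG0)).
  by rewrite /= !ffunE.
have hG : forall G, Phi G == tau -> hh G = hh G0.
  move=> G HG; rewrite /hh (reach_inv R (Hphi G HG) (n - u) (subxx U)).
  by rewrite (state_inv c r (Hphi G HG)).
have tauE : forall j, tau j = phi U (G0 j) by move=> j; rewrite -HG0 ffunE.
set f := fun j (S : {set 'I_n}) => pwt Omega S * (phi U S == tau j)%:R.
have prodf : forall G : graph n m, \prod_j f j (G j) =
    graph_weight Omega G * (Phi G == tau)%:R.
  move=> G; rewrite /f big_split /= gw_pw (ffun_eq_prod R (Phi G) tau).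
  by congr (_ * _); apply: eq_bigr => j _; rewrite ffunE.
case: (boolP (state_is G0 U c r)) => st; last first.
  rewrite (eq_bigr (fun _ => 0)); last first.
    by move=> G /andP [_ HG]; rewrite (hG G HG) /hh (negbTE st) mulr0 mulr0 !mul0r.
  rewrite [in RHS](eq_bigr (fun _ => 0)); last first.
    by move=> G /andP [_ HG]; rewrite (hG G HG) /hh (negbTE st) mulr0 mulr0.
  by rewrite big1 ?mulr0.
move: (st); rewrite /state_is => /andP [/eqP Hc /eqP Hr].
set Rs := ripple G0 U; set Cs := cloud G0 U.
have hRip : forall G, Phi G == tau -> ripple G U = Rs.
  by move=> G HG; apply: ripple_inv (subxx U) (Hphi G HG).
have hClo : forall G, Phi G == tau -> cloud G U = Cs.
  by move=> G HG; apply: cloud_inv (Hphi G HG).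
rewrite (eq_bigr (fun G : graph n m => hh G0 * ((\prod_j f j (G j)) *
   (#|[set j in Rs | x0 \in G j]| == a)%:R *
   (#|[set j in Cs | (x0 \in G j) && (#|G j :&: U| == 2)]| == b)%:R))); last first.
  move=> G /andP [_ HG]; rewrite (hG G HG) prodf HG mulr1 /Aset /Bset (hRip G HG) (hClo G HG).
  ring.
rewrite -mulr_sumr.
rewrite [in RHS](eq_bigr (fun G : graph n m => hh G0 * (\prod_j f j (G j)))); last first.
  by move=> G /andP [_ HG]; rewrite (hG G HG) prodf HG mulr1 mulrC.
rewrite -mulr_sumr mulrCA; congr (_ * _).
have zero_out : forall G, ~~ (Phi G == tau) -> \prod_j f j (G j) = 0.
  by move=> G HG; rewrite prodf (negbTE HG) mulr0.
rewrite (@big_mkcond _ _ _ _ _ (fun G : graph n m => true && (Phi G == tau))) /=.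
rewrite [in RHS](@big_mkcond _ _ _ _ _ (fun G : graph n m => true && (Phi G == tau))) /=.
rewrite (eq_bigr (fun G : graph n m => (\prod_j f j (G j)) *
   (#|[set j in Rs | x0 \in G j]| == a)%:R *
   (#|[set j in Cs | (x0 \in G j) && (#|G j :&: U| == 2)]| == b)%:R)); last first.
  by move=> G _; case: (boolP (Phi G == tau)) => // HG; rewrite zero_out // !mul0r.
rewrite [in RHS](eq_bigr (fun G : graph n m => \prod_j f j (G j))); last first.
  by move=> G _; case: (boolP (Phi G == tau)) => // HG; rewrite zero_out.
rewrite -bigA_distr_bigA /=.
rewrite (@two_count R _ _ f Rs Cs (fun S => x0 \in S)
   (fun S => (x0 \in S) && (#|S :&: U| == 2)) (1 / u%:R) (q_u n Omega u) a b).
- by rewrite /KK Hr Hc !mulrA.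
- rewrite disjoint_subset; apply/subsetP => j; rewrite !inE => /eqP ->.
  by [].
- move=> j; rewrite inE => hj.
  rewrite /f tauE /phi.
  have -> : (1 < #|G0 j :&: U|)%N = false by rewrite (eqP hj).
  rewrite hj.
  exact: (ripple_mass Omega hU hu1 hun (G0 j :\: U) x0U).
- move=> j; rewrite inE => hj.
  rewrite /f tauE /phi hj.
  exact: (cloud_mass HOmega_nonneg HOmega_sum hU hu1 hun x0U).
Qed.

End Main.

Unset Implicit Arguments.


Theorem theorem1 (R : realFieldType) (n m : nat) (Omega : nat -> R)
  (HOmega_nonneg : forall d : nat, (d <= n)%N -> 0 <= Omega d)
  (HOmega_sum : \sum_(d < n.+1) Omega d = 1)
  (u c r a b : nat)
  (Hu1 : (1 <= u)%N) (Hun : (u <= n)%N) (Hr : (0 < r)%N)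
  (Hcond : 0 < prob_state n m Omega u c r)
  (Hb : (b <= c)%N) (Ha : (1 <= a)%N) (Hab : (a <= r + b)%N) :
  cond_trans n m Omega u c r (c - b) (r + b - a)
  = ('C(c, b))%:R * (q_u n Omega u) ^+ b * (1 - q_u n Omega u) ^+ (c - b)
    * ('C(r - 1, a - 1))%:R * (1 / u%:R) ^+ (a - 1) * (1 - 1 / u%:R) ^+ (r - a).
Proof.
set K := KK n Omega u c r a b.
have PS : prob_state n m Omega u c r =
   \sum_(U : {set 'I_n} | #|U| == u) \sum_(G : graph n m)
       graph_weight Omega G * hh R u c r U G.
  rewrite /prob_state (eq_bigr (fun G : graph n m =>
      \sum_(U : {set 'I_n} | #|U| == u) graph_weight Omega G * hh R u c r U G)).
    by rewrite exchange_big.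
  by move=> G _; rewrite mulr_sumr.
have PT : prob_trans n m Omega u c r (c - b) (r + b - a) =
   (a%:R / r%:R * u%:R * K) * prob_state n m Omega u c r.
  rewrite PS mulr_sumr /prob_trans.
  rewrite (eq_bigr (fun G : graph n m =>
      \sum_(U : {set 'I_n} | #|U| == u) \sum_(x in U)
        (a%:R / r%:R) * (graph_weight Omega G * hh R u c r U G *
          (#|Aset G U x| == a)%:R * (#|Bset G U x| == b)%:R))); last first.
    move=> G _; rewrite mulr_sumr; apply: eq_bigr => U _.
    rewrite /hh; case: (boolP (state_is G U c r)) => st; last first.
      rewrite mulr0 mul0r mulr0 big1 // => x _.
      by rewrite !mul0r mulr0.
    move: (st); rewrite /state_is => /andP [/eqP HC /eqP HR].
    rewrite (trans_decomp R HC HR Hb Hab) HR.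
    rewrite [RHS](eq_bigr (fun x => (graph_weight Omega G * reach R G (n - u) U *
       (a%:R / r%:R)) * ((#|Aset G U x| == a)%:R * (#|Bset G U x| == b)%:R)));
      last by move=> x _; rewrite /=; ring.
    by rewrite -mulr_sumr /=; ring.
  rewrite exchange_big /=; apply: eq_bigr => U /eqP hU.
  rewrite exchange_big /=.
  rewrite (eq_bigr (fun x => (a%:R / r%:R) * (K *
       \sum_(G : graph n m) graph_weight Omega G * hh R u c r U G))); last first.
    move=> x xU; rewrite -mulr_sumr; congr (_ * _).
    exact: (main_U m HOmega_nonneg HOmega_sum c r a b hU Hu1 Hun xU).
  by rewrite sumr_const hU -mulr_natr; ring.
have Pne : prob_state n m Omega u c r != 0 by rewrite gt_eqF.
rewrite /cond_trans PT mulfK // /K /KK.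
have [a' ea] : exists a', a = a'.+1 by exists a.-1; lia.
have [r' er] : exists r', r = r'.+1 by exists r.-1; lia.
rewrite ea er !subn1 /=.
have HB := mul_bin_diag r'.+1 a'; simpl in HB.
have HBR : ('C(r'.+1, a'.+1))%:R = (r'.+1)%:R * ('C(r', a'))%:R / (a'.+1)%:R :> R.
  by rewrite -natrM HB natrM mulrC mulKf // pnatr_eq0.
have une : u%:R != 0 :> R by rewrite pnatr_eq0; lia.
rewrite HBR exprSr.
have -> : (r'.+1 - a'.+1)%N = (r' - a')%N by [].
field.
have h1 : forall k : nat, 1 + k%:R != 0 :> R by move=> k; rewrite addrC natr1 pnatr_eq0.
by rewrite une !h1.
Qed.
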